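(* Let $\lambda\in\mathbb{C}^*$, $\eta\in\mathbb{C}$, $\sigma\in\mathbb{C}[X]$ with $\sigma\ne0$, and let $R$ be an irreducible restricted $\mathcal{G}$-module. Then: (1) $\Omega(\lambda,\eta,\sigma,0)\otimes R$ is an irreducible $\mathcal{G}$-module if and only if $\sigma$ is a nonzero constant; (2) $\Omega(\lambda,\eta,0,\sigma)\otimes R$ is an irreducible $\mathcal{G}$-module if and only if $\sigma$ is a nonzero constant.
   Context: $\mathcal{G}$ is the complex Lie algebra with basis $\{L_n,H_n,I_n,J_n,\mathbf{c}_1,\mathbf{c}_2,\mathbf{c}_3: n\in\mathbb{Z}\}$ whose brackets of basis elements are $[L_m,L_n]=(n-m)L_{m+n}+\frac{m^3-m}{12}\delta_{m+n,0}\mathbf{c}_1$, $[L_m,H_n]=nH_{m+n}+m^2\delta_{m+n,0}\mathbf{c}_2$, $[H_m,H_n]=m\delta_{m+n,0}\mathbf{c}_3$, $[L_m,I_n]=(n-m)I_{m+n}$, $[L_m,J_n]=(n-m)J_{m+n}$, $[H_m,I_n]=I_{m+n}$, $[H_m,J_n]=-J_{m+n}$ (and antisymmetric counterparts), all other brackets of basis elements zero. $\mathcal{G}=\bigoplus_{i\in\mathbb{Z}}\mathcal{G}^i$ is $\mathbb{Z}$-graded with $\mathcal{G}^i$ spanned by $L_i,H_i,I_i,J_i$ (and also $\mathbf{c}_1,\mathbf{c}_2,\mathbf{c}_3$ when $i=0$). A $\mathcal{G}$-module $R$ is restricted if for every $v\in R$ there is $N\in\mathbb{N}$ with $\mathcal{G}^iv=0$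 for all $i>N$. For $\lambda\in\mathbb{C}^*,\eta\in\mathbb{C}$, $0\ne\sigma\in\mathbb{C}[X]$: $\Omega(\lambda,\eta,\sigma,0)$ is $\mathbb{C}[X,Y]$ with $L_mf(X,Y)=\lambda^mf(X,Y-m)(Y-mX+m\eta)$, $H_mf=\lambda^mXf(X,Y-m)$, $I_mf=\lambda^m\sigma(X) f(X-1,Y-m)$, and $J_m,\mathbf{c}_1,\mathbf{c}_2,\mathbf{c}_3$ acting as $0$; $\Omega(\lambda,\eta,0,\sigma)$ is $\mathbb{C}[X,Y]$ with $L_mf=\lambda^mf(X,Y-m)(Y+mX+m\eta)$, $H_mf=\lambda^mXf(X,Y-m)$, $J_mf=\lambda^m\sigma(X)f(X+1,Y-m)$, and $I_m,\mathbf{c}_1,\mathbf{c}_2,\mathbf{c}_3$ acting as $0$ ($m\in\mathbb{Z}$). Tensor products carry the action $x(u\otimes v)=xu\otimes v+u\otimes xv$. *)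

(* Defs.v *)
From HB Require Import structures.
From mathcomp Require Import all_boot all_order all_algebra.
From mathcomp Require Import reals Rstruct.
From mathcomp.real_closed Require Import complex.
From mathcomp Require Import mpoly.
Set Implicit Arguments. Unset Strict Implicit. Unset Printing Implicit Defensive.
Import Order.TTheory GRing.Theory Num.Theory.
Local Open Scope ring_scope.

Definition C : closedFieldType := (Rdefinitions.R)[i].

Inductive Gbasis : Type :=
  | bL of int | bH of int | bI of int | bJ of int | bc1 | bc2 | bc3.

Definition dlt (k : int) : C := if k == 0 then 1 else 0.

(* The bracket [x, y] of two basis elements, as a finite linear
   combination (list of (coefficient, basis element)) of basis elements. *)
Definition bracket (x y : Gbasis) : seq (C * Gbasis) :=
  match x, y with
  | bL m, bL n => [:: ((n - m)%:~R, bL (m + n));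
                      (dlt (m + n) * ((m ^+ 3 - m)%:~R / 12%:R), bc1)]
  | bL m, bH n => [:: (n%:~R, bH (m + n)); (dlt (m + n) * (m ^+ 2)%:~R, bc2)]
  | bH m, bL n => [:: (- m%:~R, bH (m + n)); (- (dlt (m + n) * (n ^+ 2)%:~R), bc2)]
  | bH m, bH n => [:: (dlt (m + n) * m%:~R, bc3)]
  | bL m, bI n => [:: ((n - m)%:~R, bI (m + n))]
  | bI m, bL n => [:: (- (m - n)%:~R, bI (m + n))]
  | bL m, bJ n => [:: ((n - m)%:~R, bJ (m + n))]
  | bJ m, bL n => [:: (- (m - n)%:~R, bJ (m + n))]
  | bH m, bI n => [:: (1, bI (m + n))]
  | bI m, bH n => [:: (-1, bI (m + n))]
  | bH m, bJ n => [:: (-1, bJ (m + n))]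
  | bJ m, bH n => [:: (1, bJ (m + n))]
  | _, _ => [::]
  end.

Definition in_deg (i : int) (x : Gbasis) : bool :=
  match x with
  | bL n | bH n | bI n | bJ n => n == i
  | bc1 | bc2 | bc3 => i == 0
  end.

(* A G-module structure on the complex vector space V, given by the
   (linear) action of the basis elements; the Lie algebra action is the
   linear extension, and it is a representation iff the bracket relations
   hold on basis elements. *)
Definition is_Gmodule (V : lmodType C) (act : Gbasis -> V -> V) : Prop :=
  (forall x (a : C) (u v : V), act x (a *: u + v) = a *: act x u + act x v) /\
  (forall x y (v : V),
      act x (act y v) - act y (act x v) =
      \sum_(p <- bracket x y) p.1 *: act p.2 v).

Definition restricted (V : lmodType C) (act : Gbasis -> V -> V) : Prop :=
  forall v : V, exists N : nat,
    forall (i : int) (x : Gbasis), (N%:Z < i) -> in_deg i x -> act x v = 0.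

Definition is_submodule (V : lmodType C) (act : Gbasis -> V -> V)
    (W : V -> Prop) : Prop :=
  W 0 /\ (forall (a : C) u v, W u -> W v -> W (a *: u + v)) /\
  (forall x u, W u -> W (act x u)).

Definition irreducible (V : lmodType C) (act : Gbasis -> V -> V) : Prop :=
  (exists v : V, v != 0) /\
  forall W : V -> Prop, is_submodule act W ->
    (forall v, W v -> v = 0) \/ (forall v, W v).

Definition bilinear (U V W : lmodType C) (b : U -> V -> W) : Prop :=
  (forall (a : C) u1 u2 v, b (a *: u1 + u2) v = a *: b u1 v + b u2 v) /\
  (forall (a : C) u v1 v2, b u (a *: v1 + v2) = a *: b u v1 + b u v2).

Definition linear_map (V W : lmodType C) (g : V -> W) : Prop :=
  forall (a : C) u v, g (a *: u + v) = a *: g u + g v.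

Definition is_tensor (U V T : lmodType C) (t : U -> V -> T) : Prop :=
  bilinear t /\
  forall (W : lmodType C) (b : U -> V -> W), bilinear b ->
    exists g : T -> W,
      [/\ linear_map g, (forall u v, g (t u v) = b u v) &
          (forall g' : T -> W, linear_map g' ->
             (forall u v, g' (t u v) = b u v) -> forall z, g' z = g z)].

Definition CXY : lmodType C := {mpoly C[2]}.
Definition Xv : {mpoly C[2]} := 'X_(@ord0 1).
Definition Yv : {mpoly C[2]} := 'X_(@ord_max 1).

Definition polyX (s : {poly C}) : {mpoly C[2]} :=
  \sum_(k < size s) (s`_k)%:MP * Xv ^+ k.

Definition shiftXY (a b : C) (f : {mpoly C[2]}) : {mpoly C[2]} :=
  f \mPo [tuple Xv + a%:MP; Yv + b%:MP].

(* The module Omega(lambda, eta, sigma, 0). *)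
Definition OmegaI (lam eta : C) (s : {poly C}) (x : Gbasis)
    (f : {mpoly C[2]}) : {mpoly C[2]} :=
  match x with
  | bL m => (lam ^ m) *: (shiftXY 0 (- m%:~R) f *
                          (Yv - (m%:~R)%:MP * Xv + (m%:~R * eta)%:MP))
  | bH m => (lam ^ m) *: (Xv * shiftXY 0 (- m%:~R) f)
  | bI m => (lam ^ m) *: (polyX s * shiftXY (-1) (- m%:~R) f)
  | _ => 0
  end.

(* The module Omega(lambda, eta, 0, sigma). *)
Definition OmegaJ (lam eta : C) (s : {poly C}) (x : Gbasis)
    (f : {mpoly C[2]}) : {mpoly C[2]} :=
  match x with
  | bL m => (lam ^ m) *: (shiftXY 0 (- m%:~R) f *
                          (Yv + (m%:~R)%:MP * Xv + (m%:~R * eta)%:MP))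
  | bH m => (lam ^ m) *: (Xv * shiftXY 0 (- m%:~R) f)
  | bJ m => (lam ^ m) *: (polyX s * shiftXY 1 (- m%:~R) f)
  | _ => 0
  end.

Definition tensor_action (V T : lmodType C)
    (omega : Gbasis -> CXY -> CXY) (rho : Gbasis -> V -> V)
    (t : CXY -> V -> T) (act : Gbasis -> T -> T) : Prop :=
  forall x u v, act x (t u v) = t (omega x u) v + t u (rho x v).

Definition nonzero_constant (s : {poly C}) : Prop :=
  exists c : C, c != 0 /\ s = c%:P.

(* Main.v *)
Require Import Defs.
From HB Require Import structures.
From mathcomp Require Import all_boot all_order all_algebra.
From mathcomp Require Import reals Rstruct.
From mathcomp.real_closed Require Import complex.
From mathcomp Require Import mpoly.
From Stdlib Require Import ClassicalEpsilon Classical.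
From mathcomp Require Import ring zify.
Set Implicit Arguments. Unset Strict Implicit. Unset Printing Implicit Defensive.
Import Order.TTheory GRing.Theory Num.Theory.
Local Open Scope ring_scope.

Section Quot.
Context (T : lmodType C) (S : T -> Prop).
Hypothesis S0 : S 0.
Hypothesis Slin : forall (a : C) u v, S u -> S v -> S (a *: u + v).

Lemma SN u : S u -> S (- u).
Proof. by move=> Su; have := Slin (-1) Su S0; rewrite addr0 scaleN1r. Qed.
Lemma SD u v : S u -> S v -> S (u + v).
Proof. by move=> Su Sv; have := Slin 1 Su Sv; rewrite scale1r. Qed.
Lemma SZ a u : S u -> S (a *: u).
Proof. by move=> Su; have := Slin a Su S0; rewrite addr0. Qed.

Definition qrel (x y : T) : bool :=
  if excluded_middle_informative (S (x - y)) then true else false.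
Lemma qrelP x y : reflect (S (x - y)) (qrel x y).
Proof. rewrite /qrel; case: excluded_middle_informative => h; by constructor. Qed.

Lemma qrel_refl : reflexive qrel.
Proof. by move=> x; apply/qrelP; rewrite subrr. Qed.
Lemma qrel_sym : ssrbool.symmetric qrel.
Proof.
move=> x y; apply/idP/idP => /qrelP h; apply/qrelP;
  by have := SN h; rewrite opprB.
Qed.
Lemma qrel_trans : transitive qrel.
Proof.
move=> y x z /qrelP h1 /qrelP h2; apply/qrelP.
by have := SD h1 h2; rewrite addrA subrK.
Qed.

Local Open Scope quotient_scope.
Canonical qequiv := EquivRel qrel qrel_refl qrel_sym qrel_trans.
Definition Q := {eq_quot qequiv}.
HB.instance Definition _ := Choice.on Q.

Lemma piQ_eq x y : (\pi_Q x = \pi_Q y) <-> S (x - y).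
Proof.
split; first by move/eqP; rewrite eqmodE => /qrelP.
by move=> h; apply/eqP; rewrite eqmodE; apply/qrelP.
Qed.

Definition q0 : Q := locked (\pi_Q 0).
Definition qadd : Q -> Q -> Q := locked (fun a b => \pi_Q (repr a + repr b)).
Definition qopp : Q -> Q := locked (fun a => \pi_Q (- repr a)).
Definition qscale : C -> Q -> Q := locked (fun c a => \pi_Q (c *: repr a)).

Lemma repr_pi x : S (repr (\pi_Q x) - x).
Proof. by apply/piQ_eq; rewrite reprK. Qed.

Lemma qaddE x y : qadd (\pi_Q x) (\pi_Q y) = \pi_Q (x + y).
Proof.
rewrite /qadd -lock; apply/piQ_eq; have := SD (repr_pi x) (repr_pi y).
by rewrite addrACA opprD.
Qed.
Lemma qoppE x : qopp (\pi_Q x) = \pi_Q (- x).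
Proof. by rewrite /qopp -lock; apply/piQ_eq; have := SN (repr_pi x); rewrite opprB opprK addrC. Qed.
Lemma qscaleE c x : qscale c (\pi_Q x) = \pi_Q (c *: x).
Proof. by rewrite /qscale -lock; apply/piQ_eq; have := SZ c (repr_pi x); rewrite scalerBr. Qed.

Lemma qaddA : associative qadd.
Proof.
move=> a b c; rewrite -[a]reprK; set x := repr a; rewrite -[b]reprK; set y := repr b; rewrite -[c]reprK; set z := repr c.
by rewrite !qaddE addrA.
Qed.
Lemma qaddC : commutative qadd.
Proof. by move=> a b; rewrite -[a]reprK; set x := repr a; rewrite -[b]reprK; set y := repr b; rewrite !qaddE addrC. Qed.
Lemma qadd0 : left_id q0 qadd.
Proof. by move=> a; rewrite -[a]reprK; set x := repr a; rewrite /q0 -lock qaddE add0r. Qed.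
Lemma qaddN : left_inverse q0 qopp qadd.
Proof. by move=> a; rewrite -[a]reprK; set x := repr a; rewrite qoppE qaddE addNr /q0 -lock. Qed.

HB.instance Definition _ := GRing.isZmodule.Build Q qaddA qaddC qadd0 qaddN.

Lemma qscaleA a b v : qscale a (qscale b v) = qscale (a * b) v.
Proof. by rewrite -[v]reprK; set x := repr v; rewrite !qscaleE scalerA. Qed.
Lemma qscale1 : left_id 1 qscale.
Proof. by move=> a; rewrite -[a]reprK; set x := repr a; rewrite qscaleE scale1r. Qed.
Lemma qscaleDr : right_distributive qscale +%R.
Proof.
move=> a u v; rewrite -[u]reprK; set x := repr u; rewrite -[v]reprK; set y := repr v.
by rewrite /GRing.add /= !qaddE !qscaleE qaddE scalerDr.
Qed.
Lemma qscaleDl v : {morph qscale^~ v : a b / a + b}.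
Proof.
move=> a b; rewrite -[v]reprK; set x := repr v.
by rewrite /GRing.add /= !qscaleE qaddE scalerDl.
Qed.

HB.instance Definition _ := GRing.Zmodule_isLmodule.Build C Q
  qscaleA qscale1 qscaleDr qscaleDl.

Definition piQ (x : T) : Q := \pi_Q x.

Lemma piQ_lin : linear_map piQ.
Proof.
move=> a u v; rewrite /piQ.
by rewrite [X in _ = X + _]/GRing.scale /= qscaleE /GRing.add /= qaddE.
Qed.

Lemma piQ0 z : piQ z = 0 -> S z.
Proof.
have e : (0 : Q) = \pi_Q 0 by change (q0 = \pi_Q 0); rewrite /q0 -lock.
by rewrite /piQ e => /piQ_eq; rewrite subr0.
Qed.

Lemma piQS z : S z -> piQ z = 0.
Proof.
have e : (0 : Q) = \pi_Q 0 by change (q0 = \pi_Q 0); rewrite /q0 -lock.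
by rewrite /piQ e => h; apply/piQ_eq; rewrite subr0.
Qed.
End Quot.

Section Bil.
Context (U V W : lmodType C) (b : U -> V -> W) (hb : Defs.bilinear b).
Lemma bil0l v : b 0 v = 0.
Proof.
have [h _] := hb; have e := h 1 0 0 v; rewrite !scale1r addr0 in e.
by apply: (@addrI _ (b 0 v)); rewrite addr0 -e.
Qed.
Lemma bil0r u : b u 0 = 0.
Proof.
have [_ h] := hb; have e := h 1 u 0 0; rewrite !scale1r addr0 in e.
by apply: (@addrI _ (b u 0)); rewrite addr0 -e.
Qed.
Lemma bilDl u1 u2 v : b (u1 + u2) v = b u1 v + b u2 v.
Proof. by have [h _] := hb; have := h 1 u1 u2 v; rewrite !scale1r. Qed.
Lemma bilDr u v1 v2 : b u (v1 + v2) = b u v1 + b u v2.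
Proof. by have [_ h] := hb; have := h 1 u v1 v2; rewrite !scale1r. Qed.
Lemma bilZl a u v : b (a *: u) v = a *: b u v.
Proof. by have [h _] := hb; have := h a u 0 v; rewrite !addr0 bil0l addr0. Qed.
Lemma bilZr a u v : b u (a *: v) = a *: b u v.
Proof. by have [_ h] := hb; have := h a u v 0; rewrite !addr0 bil0r addr0. Qed.
Lemma bilNl u v : b (- u) v = - b u v.
Proof. by rewrite -scaleN1r bilZl scaleN1r. Qed.
Lemma bilNr u v : b u (- v) = - b u v.
Proof. by rewrite -scaleN1r bilZr scaleN1r. Qed.
Lemma bilBl u1 u2 v : b (u1 - u2) v = b u1 v - b u2 v.
Proof. by rewrite bilDl bilNl. Qed.
Lemma bilBr u v1 v2 : b u (v1 - v2) = b u v1 - b u v2.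
Proof. by rewrite bilDr bilNr. Qed.
Lemma bil_suml (I : Type) (r : seq I) (F : I -> U) v :
  b (\sum_(i <- r) F i) v = \sum_(i <- r) b (F i) v.
Proof.
elim: r => [|x r IH]; first by rewrite !big_nil bil0l.
by rewrite !big_cons bilDl IH.
Qed.
Lemma bil_sumr (I : Type) (r : seq I) (F : I -> V) u :
  b u (\sum_(i <- r) F i) = \sum_(i <- r) b u (F i).
Proof.
elim: r => [|x r IH]; first by rewrite !big_nil bil0r.
by rewrite !big_cons bilDr IH.
Qed.
End Bil.

Lemma tensor_span (V T : lmodType C) (t : CXY -> V -> T) :
  is_tensor t ->
  forall z : T, exists l : seq (CXY * V), z = \sum_(p <- l) t p.1 p.2.
Proof.
move=> [bil univ] z.
pose S (z : T) := exists l : seq (CXY * V), z = \sum_(p <- l) t p.1 p.2.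
have S0 : S 0 by exists [::]; rewrite big_nil.
have Slin : forall (a : C) u v, S u -> S v -> S (a *: u + v).
  move=> a u v [l1 ->] [l2 ->].
  exists ([seq (a *: p.1, p.2) | p <- l1] ++ l2).
  rewrite big_cat big_map /= scaler_sumr; congr (_ + _).
  by apply: eq_bigr => p _; rewrite (bilZl bil).
have b0 : Defs.bilinear (fun (_ : CXY) (_ : V) => (0 : Q S0 Slin)).
  by split=> *; rewrite scaler0 addr0.
have [g [_ _ uniq]] := univ (Q S0 Slin) _ b0.
have h1 := uniq (piQ S0 Slin) (piQ_lin S0 Slin).
have l0 : linear_map (fun _ : T => (0 : Q S0 Slin)) by move=> *; rewrite scaler0 addr0.
have h2 := uniq _ l0 (fun _ _ => erefl).
have e : piQ S0 Slin z = 0.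
  rewrite h1; last first.
    move=> u v; apply: piQS; exists [:: (u, v)].
    by rewrite big_seq1.
  by rewrite -h2.
exact: piQ0 e.
Qed.

Section Shift.
Context (k : C).

Lemma coefXaddCn i j : (('X + k%:P) ^+ i)`_j = k ^+ (i - j) *+ 'C(i, j).
Proof.
elim: i j => [|i IH] j.
  by rewrite expr0 coefC bin0n; case: j.
rewrite exprSr mulrDr coefD coefMX coefMC.
case: j => [|j] /=.
  by rewrite add0r IH !subn0 !bin0 !mulr1n exprSr.
rewrite !IH subSS binS mulrnDr [RHS]addrC; congr (_ + _).
case: (ltnP j i) => hj.
  by rewrite mulrnAl -exprSr subnSK.
by rewrite bin_small ?ltnS // !mulr0n mul0r.
Qed.

Lemma size_shift (q : {poly C}) : size (q \Po ('X + k%:P)) = size q.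
Proof. by rewrite size_comp_poly2 // size_XaddC. Qed.

Lemma coef_shift_sum (q : {poly C}) (n j : nat) : (size q <= n)%N ->
  (q \Po ('X + k%:P))`_j = \sum_(l < n) q`_l * (k ^+ (l - j) *+ 'C(l, j)).
Proof.
move=> hs; rewrite coef_comp_poly (big_ord_widen n (fun l => q`_l * (('X + k%:P) ^+ l)`_j) hs).
rewrite big_mkcond /=; apply: eq_bigr => l _; rewrite coefXaddCn.
by case: ltnP => // hl; rewrite nth_default // mul0r.
Qed.

Lemma coef_shift_top (q : {poly C}) (n : nat) : (size q <= n.+2)%N ->
  (q \Po ('X + k%:P))`_n.+1 = q`_n.+1.
Proof.
move=> hs; rewrite (coef_shift_sum _ hs) big_ord_recr /= subnn binn mulr1n expr0 mulr1.
by rewrite big1 ?add0r // => l _; rewrite bin_small ?mulr0n ?mulr0.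
Qed.

Lemma coef_shift_sub (q : {poly C}) (n : nat) : (size q <= n.+2)%N ->
  (q \Po ('X + k%:P))`_n = q`_n + (n.+1)%:R * k * q`_n.+1.
Proof.
move=> hs; rewrite (coef_shift_sum _ hs) 2!big_ord_recr /=.
rewrite big1 ?add0r; last first.
  by move=> l _; rewrite bin_small ?mulr0n ?mulr0.
rewrite subnn binn mulr1n expr0 mulr1; congr (_ + _).
by rewrite subSn // subnn expr1 binSn mulrC -mulr_natl.
Qed.
End Shift.

Section Diff.
Context (k1 k2 : C).
Definition Dif (q : {poly C}) := (q \Po ('X + k1%:P)) - (q \Po ('X + k2%:P)).

Lemma Dif_lin a p q : Dif (a *: p + q) = a *: Dif p + Dif q.
Proof.
rewrite /Dif !comp_polyD !comp_polyZ scalerBr.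
by rewrite addrACA opprD.
Qed.

Lemma Dif_size (q : {poly C}) (n : nat) : (size q <= n.+2)%N -> (size (Dif q) <= n.+1)%N.
Proof.
move=> hs; apply/leq_sizeP => j hj; rewrite coefB.
move: hj; rewrite leq_eqVlt => /orP[/eqP <-|hj].
  by rewrite !coef_shift_top // subrr.
rewrite !nth_default ?subrr // size_shift //; exact: leq_trans hs hj.
Qed.

Lemma Dif_coef (q : {poly C}) (n : nat) : (size q <= n.+2)%N -> (Dif q)`_n = (n.+1)%:R * (k1 - k2) * q`_n.+1.
Proof.
by move=> hs; rewrite coefB !coef_shift_sub //; ring.
Qed.

Lemma Dif_small (q : {poly C}) : (size q <= 1)%N -> Dif q = 0.
Proof. by move=> /size1_polyC ->; rewrite /Dif !comp_polyC subrr. Qed.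

Lemma Dif_iter (B : nat) (q : {poly C}) : (size q <= B.+1)%N ->
  iter B Dif q = ((B`!)%:R * (k1 - k2) ^+ B * q`_B)%:P.
Proof.
elim: B q => [|B IH] q hs.
  by rewrite /= fact0 mul1r expr0 mul1r -size1_polyC.
rewrite iterSr IH ?Dif_size // Dif_coef // factS natrM.
by rewrite exprSr; congr (_%:P); rewrite mulrC; ring.
Qed.
End Diff.

Lemma Dif_size' (k1 k2 : C) (q : {poly C}) (n : nat) :
  (size q <= n.+1)%N -> (size (Dif k1 k2 q) <= n)%N.
Proof.
case: n => [|n] hs; first by rewrite Dif_small ?size_poly0.
exact: Dif_size.
Qed.

Lemma size_iter_shift (e : C) n (p : {poly C}) :
  size (iter n (fun q => q \Po ('X + e%:P)) p) = size p.
Proof. by elim: n => //= n IH; rewrite size_shift IH. Qed.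

Lemma lead_iter_shift (e : C) n (p : {poly C}) :
  lead_coef (iter n (fun q => q \Po ('X + e%:P)) p) = lead_coef p.
Proof.
elim: n => //= n IH.
by rewrite lead_coef_comp ?size_XaddC // lead_coefXaddC expr1n mulr1 IH.
Qed.

Definition cfu (x : {mpoly C[2]}) : commr_rmorph (@mpolyC 2 C) x :=
  fun y => mulrC _ _.
Notation evp x := (horner_morph (cfu x)).
Definition ioXY (p q : {poly C}) : {mpoly C[2]} := evp Xv p * evp Yv q.

Lemma evpC x c : evp x c%:P = c%:MP.
Proof. exact: horner_morphC. Qed.
Lemma evpX x : evp x 'X = x.
Proof. exact: horner_morphX. Qed.
Lemma evpZ x c p : evp x (c *: p) = c *: evp x p.
Proof. by rewrite -mul_polyC rmorphM /= evpC mul_mpolyC. Qed.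
Lemma evpXn x n : evp x 'X^n = x ^+ n.
Proof. by rewrite rmorphXn /= evpX. Qed.

Lemma shiftXY_lin a b c f g :
  shiftXY a b (c *: f + g) = c *: shiftXY a b f + shiftXY a b g.
Proof. by rewrite /shiftXY comp_mpolyD comp_mpolyZ. Qed.

Lemma shiftXY_M a b f g : shiftXY a b (f * g) = shiftXY a b f * shiftXY a b g.
Proof. by rewrite /shiftXY rmorphM. Qed.

Lemma shiftXY_C a b c : shiftXY a b c%:MP = c%:MP.
Proof. by rewrite /shiftXY comp_mpolyC. Qed.

Lemma shiftXY_Xv a b : shiftXY a b Xv = Xv + a%:MP.
Proof. by rewrite /shiftXY /Xv comp_mpolyXU. Qed.
Lemma shiftXY_Yv a b : shiftXY a b Yv = Yv + b%:MP.
Proof. by rewrite /shiftXY /Yv comp_mpolyXU. Qed.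

Lemma shift_evp a b x p :
  shiftXY a b (evp x p) = evp (shiftXY a b x) p.
Proof.
rewrite /horner_morph /shiftXY -horner_map; congr (_.[_]).
rewrite -map_poly_comp; apply: eq_map_poly => y /=.
exact: comp_mpolyC.
Qed.

Lemma evp_comp x p c : evp (x + c%:MP) p = evp x (p \Po ('X + c%:P)).
Proof.
rewrite /horner_morph map_comp_poly horner_comp map_polyXaddC; congr (_.[_]).
by rewrite hornerD hornerX hornerC.
Qed.

Lemma shift_iota a b p q :
  shiftXY a b (ioXY p q) = ioXY (p \Po ('X + a%:P)) (q \Po ('X + b%:P)).
Proof.
by rewrite /ioXY shiftXY_M !shift_evp shiftXY_Xv shiftXY_Yv !evp_comp.
Qed.

Lemma iota_linl a p1 p2 q : ioXY (a *: p1 + p2) q = a *: ioXY p1 q + ioXY p2 q.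
Proof. by rewrite /ioXY rmorphD /= evpZ mulrDl scalerAl. Qed.
Lemma iota_linr a p q1 q2 : ioXY p (a *: q1 + q2) = a *: ioXY p q1 + ioXY p q2.
Proof. by rewrite /ioXY rmorphD /= evpZ mulrDr scalerAr. Qed.
Lemma iotaC c d : ioXY c%:P d%:P = (c * d)%:MP.
Proof. by rewrite /ioXY !evpC mpolyCM. Qed.
Lemma iota_p1 p : ioXY p 1 = evp Xv p.
Proof. by rewrite /ioXY rmorph1 /= mulr1. Qed.
Lemma iota0l q : ioXY 0 q = 0.
Proof. by rewrite /ioXY rmorph0 /= mul0r. Qed.
Lemma iota0r p : ioXY p 0 = 0.
Proof. by rewrite /ioXY rmorph0 /= mulr0. Qed.

Lemma mono_iota (m : 'X_{1..2}) : 'X_[m] = ioXY 'X^(m ord0) 'X^(m ord_max).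
Proof.
rewrite mpolyXE_id big_ord_recl big_ord1 /ioXY !evpXn /Xv /Yv.
by congr (_ * 'X_ _ ^+ m _); apply: val_inj.
Qed.

Lemma iota_L p q (r : {poly C}) :
  ioXY p q * (Yv + evp Xv r) = ioXY p (q * 'X) + ioXY (p * r) q.
Proof.
rewrite /ioXY mulrDr !rmorphM /= evpX; congr (_ + _); ring.
Qed.

Lemma iota_subr p q1 q2 : ioXY p (q1 - q2) = ioXY p q1 - ioXY p q2.
Proof. by rewrite /ioXY rmorphB /= mulrBr. Qed.
Lemma iota_subl p1 p2 q : ioXY (p1 - p2) q = ioXY p1 q - ioXY p2 q.
Proof. by rewrite /ioXY rmorphB /= mulrBl. Qed.

Lemma polyX_C (c : C) : c != 0 -> Defs.polyX c%:P = c%:MP.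
Proof.
move=> c0; rewrite /Defs.polyX size_polyC c0 big_ord1 expr0 mulr1.
by rewrite coefC eqxx.
Qed.


Section Lin.
Context (A B : lmodType C) (g : A -> B) (hg : linear_map g).
Lemma lin0 : g 0 = 0.
Proof.
have e := hg 1 0 0; rewrite !scale1r addr0 in e.
by apply: (@addrI _ (g 0)); rewrite addr0 -e.
Qed.
Lemma linD u v : g (u + v) = g u + g v.
Proof. by have := hg 1 u v; rewrite !scale1r. Qed.
Lemma linZ a u : g (a *: u) = a *: g u.
Proof. by have := hg a u 0; rewrite !addr0 lin0 addr0. Qed.
Lemma linB u v : g (u - v) = g u - g v.
Proof. by rewrite linD -scaleN1r linZ scaleN1r. Qed.
Lemma lin_sum (I : Type) (r : seq I) (F : I -> A) :
  g (\sum_(i <- r) F i) = \sum_(i <- r) g (F i).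
Proof.
elim: r => [|x r IH]; first by rewrite !big_nil lin0.
by rewrite !big_cons linD IH.
Qed.
End Lin.

Section Sub.
Context (A : lmodType C) (W : A -> Prop) (W0 : W 0)
  (Wlin : forall a u v, W u -> W v -> W (a *: u + v)).
Lemma subD u v : W u -> W v -> W (u + v).
Proof. by move=> Su Sv; have := Wlin 1 Su Sv; rewrite scale1r. Qed.
Lemma subZ a u : W u -> W (a *: u).
Proof. by move=> Su; have := Wlin a Su W0; rewrite addr0. Qed.
Lemma subB u v : W u -> W v -> W (u - v).
Proof. by move=> Su Sv; have := Wlin (-1) Sv Su; rewrite scaleN1r addrC. Qed.
Lemma sub_sum (I : eqType) (r : seq I) (F : I -> A) :
  (forall i, i \in r -> W (F i)) -> W (\sum_(i <- r) F i).
Proof.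
elim: r => [|x r IH] h; first by rewrite big_nil.
rewrite big_cons; apply: subD; first by apply: h; rewrite inE eqxx.
by apply: IH => i hi; apply: h; rewrite inE hi orbT.
Qed.
Lemma sub_sumT (I : Type) (r : seq I) (F : I -> A) :
  (forall i, W (F i)) -> W (\sum_(i <- r) F i).
Proof.
elim: r => [|x r IH] h; first by rewrite big_nil.
by rewrite big_cons; apply: subD; [apply: h | apply: IH].
Qed.
End Sub.

Section Generic.
Context (V : lmodType C) (rho : Gbasis -> V -> V) (T : lmodType C)
  (t : CXY -> V -> T) (act : Gbasis -> T -> T) (omega : Gbasis -> CXY -> CXY).
Context (rres : restricted rho) (rirr : irreducible rho)
  (ht : is_tensor t) (hact : is_Gmodule act) (hta : tensor_action omega rho t act).

Let tb : Defs.bilinear t := proj1 ht.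
Let actlin x : linear_map (act x) := proj1 hact x.

Definition killed N (v : V) := forall (i : int) (x : Gbasis),
  N%:Z < i -> in_deg i x -> rho x v = 0.

Lemma killed_mono N M v : (N <= M)%N -> killed N v -> killed M v.
Proof.
move=> hNM hk i x hi; apply: hk; apply: le_lt_trans hi; by rewrite lez_nat.
Qed.

Lemma killed_seq (I : eqType) (s : seq I) (G : I -> V) :
  exists N, forall i, i \in s -> killed N (G i).
Proof.
elim: s => [|i s [N hN]]; first by exists 0%N.
have [Ni hi] := rres (G i).
exists (maxn N Ni) => j; rewrite inE => /orP[/eqP ->|hj].
  by apply: killed_mono hi; apply: leq_maxr.
by apply: killed_mono (hN j hj); apply: leq_maxl.
Qed.

Lemma killed_fin (I : finType) (G : I -> V) : exists N, forall i, killed N (G i).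
Proof.
have [N hN] := killed_seq (enum I) G; exists N => i; apply: hN.
by rewrite mem_enum.
Qed.

Lemma act_killed N v f x (m : int) :
  killed N v -> N%:Z < m -> in_deg m x -> act x (t f v) = t (omega x f) v.
Proof. by move=> hk hm hd; rewrite hta (hk m x hm hd) (bil0r tb) addr0. Qed.

Lemma ev_bil (pt : 'I_2 -> C) :
  Defs.bilinear (fun (f : CXY) (v : V) => f.@[pt] *: v).
Proof.
split=> a u1 u2 v /=.
  by rewrite mevalD mevalZ scalerDl scalerA.
by rewrite scalerDr !scalerA mulrC.
Qed.

Lemma ev_map (pt : 'I_2 -> C) :
  exists g : T -> V, linear_map g /\ forall f v, g (t f v) = f.@[pt] *: v.
Proof.
have [g [hg1 hg2 _]] := (proj2 ht) V _ (ev_bil pt).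
by exists g.
Qed.

Lemma t_neq0 f v : v != 0 -> (exists pt, f.@[pt] = 1) -> t f v != 0.
Proof.
move=> hv [pt hpt]; have [g [hg hgt]] := ev_map pt.
apply: contra hv => /eqP h.
by have := hgt f v; rewrite h (lin0 hg) hpt scale1r => <-.
Qed.

Context (lam c e sg eta : C) (lam0 : lam != 0) (c0 : c != 0) (e0 : e != 0)
  (K : int -> Gbasis) (hKd : forall m, in_deg m (K m))
  (hK : forall m f, omega (K m) f = lam ^ m *: (c%:MP * shiftXY e (- m%:~R) f))
  (hH : forall m f, omega (bH m) f = lam ^ m *: (Xv * shiftXY 0 (- m%:~R) f))
  (hL : forall m f, omega (bL m) f = lam ^ m *:
     (shiftXY 0 (- m%:~R) f * (Yv + (sg * m%:~R)%:MP * Xv + (m%:~R * eta)%:MP))).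

Section WithW.
Context (W : T -> Prop) (hW : is_submodule act W).
Let W0 : W 0 := proj1 hW.
Let Wlin : forall a u v, W u -> W v -> W (a *: u + v) := proj1 (proj2 hW).
Let Wact : forall x u, W u -> W (act x u) := proj2 (proj2 hW).

Definition good N (phi : CXY -> CXY) := forall (I : Type) (r : seq I)
  (F : I -> CXY) (G : I -> V), (forall i, killed N (G i)) ->
  W (\sum_(i <- r) t (F i) (G i)) -> W (\sum_(i <- r) t (phi (F i)) (G i)).

Lemma good_id N : good N id.
Proof. by []. Qed.

Lemma good_comp N phi psi : good N phi -> good N psi -> good N (fun f => phi (psi f)).
Proof.
move=> hp hq I r F G hk hw.
exact: (hp _ r (fun i => psi (F i)) G hk (hq _ r F G hk hw)).
Qed.

Lemma good_sub N phi psi : good N phi -> good N psi -> good N (fun f => phi f - psi f).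
Proof.
move=> hp hq I r F G hk hw.
have -> : \sum_(i <- r) t (phi (F i) - psi (F i)) (G i) =
  \sum_(i <- r) t (phi (F i)) (G i) - \sum_(i <- r) t (psi (F i)) (G i).
  by rewrite -sumrB; apply: eq_bigr => i _; rewrite (bilBl tb).
by apply: (subB Wlin); [exact: (hp _ r F G hk hw) | exact: (hq _ r F G hk hw)].
Qed.

Lemma good_iter N phi n : good N phi -> good N (iter n phi).
Proof.
move=> hp; elim: n => [|n IH]; first exact: good_id.
exact: good_comp hp IH.
Qed.

Lemma good_omega N x (m : int) (a : C) phi : N%:Z < m -> in_deg m x -> a != 0 ->
  (forall f, omega x f = a *: phi f) -> good N phi.
Proof.
move=> hm hd a0 hom I r F G hk hw.
have := Wact x hw; rewrite (lin_sum (actlin x)).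
under eq_bigr => i _ do rewrite (@act_killed N (G i) (F i) x m (hk i) hm hd) hom (bilZl tb).
rewrite -scaler_sumr => h; have := subZ W0 Wlin a^-1 h.
by rewrite scalerA mulVf // scale1r.
Qed.

Lemma good_K N (m : int) : N%:Z < m -> good N (shiftXY e (- m%:~R)).
Proof.
move=> hm; apply: (@good_omega N (K m) m (lam ^ m * c)) => //.
  by rewrite mulf_neq0 // expfz_neq0.
by move=> f; rewrite hK mul_mpolyC scalerA.
Qed.

Lemma good_H N (m : int) : N%:Z < m -> good N (fun f => Xv * shiftXY 0 (- m%:~R) f).
Proof.
move=> hm; apply: (@good_omega N (bH m) m (lam ^ m)) => //.
  by rewrite /= eqxx.
by rewrite expfz_neq0.
Qed.

Lemma good_L N (m : int) : N%:Z < m -> good N (fun f =>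
  shiftXY 0 (- m%:~R) f * (Yv + (sg * m%:~R)%:MP * Xv + (m%:~R * eta)%:MP)).
Proof.
move=> hm; apply: (@good_omega N (bL m) m (lam ^ m)) => //.
  by rewrite /= eqxx.
by rewrite expfz_neq0.
Qed.

Section StepB.
Context (N : nat).
Definition mP : int := (N.+1)%:Z.
Definition kP : C := - (mP%:~R).
Definition kQ : C := - ((mP + 1)%:~R).
Definition Pop := shiftXY e kP.
Definition Qop := shiftXY e kQ.
Definition shX (p : {poly C}) := p \Po ('X + e%:P).

Lemma goodP : good N Pop.
Proof. by apply: good_K; rewrite /mP ltz_nat. Qed.
Lemma goodQ : good N Qop.
Proof. by apply: good_K; rewrite /mP; lia. Qed.

Definition phiAB A B (f : CXY) :=
  iter A (fun g => Pop g - g) (iter B (fun g => Qop g - Pop g) f).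

Lemma good_phi A B : good N (phiAB A B).
Proof.
apply: good_comp; apply: good_iter; apply: good_sub;
  [exact: goodP | exact: good_id | exact: goodQ | exact: goodP].
Qed.

Lemma kQP : kQ - kP = -1.
Proof. by rewrite /kQ /kP intrD mulr1z; ring. Qed.

Lemma QP_io p q : Qop (ioXY p q) - Pop (ioXY p q) = ioXY (shX p) (Dif kQ kP q).
Proof. by rewrite /Qop /Pop !shift_iota /Dif iota_subr. Qed.

Lemma iterQP B p q : iter B (fun g => Qop g - Pop g) (ioXY p q) =
  ioXY (iter B shX p) (iter B (Dif kQ kP) q).
Proof. by elim: B => //= B ->; rewrite QP_io. Qed.

Lemma P1_io p d : Pop (ioXY p d%:P) - ioXY p d%:P = ioXY (Dif e 0 p) d%:P.
Proof.
rewrite /Pop shift_iota comp_polyC /Dif iota_subl; congr (_ - ioXY _ _).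
by rewrite polyC0 addr0 comp_polyXr.
Qed.

Lemma iterP1 A p d : iter A (fun g => Pop g - g) (ioXY p d%:P) =
  ioXY (iter A (Dif e 0) p) d%:P.
Proof. by elim: A => //= A ->; rewrite P1_io. Qed.

Lemma coef_iter_shX B a A : (a <= A)%N -> (iter B shX 'X^a)`_A = (A == a)%:R.
Proof.
move=> ha; have hs := size_iter_shift e B 'X^a; rewrite size_polyXn in hs.
case: (eqVneq A a) => [->|hne].
  have := lead_iter_shift e B 'X^a; rewrite lead_coefXn lead_coefE.
  by rewrite -/shX hs.
rewrite nth_default // -/shX hs; by rewrite ltn_neqAle eq_sym hne.
Qed.

Lemma phi_mono_lt A B a b : (b < B)%N -> phiAB A B (ioXY 'X^a 'X^b) = 0.
Proof.
move=> hb; rewrite /phiAB iterQP Dif_iter; last by rewrite size_polyXn ltnS ltnW.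
rewrite iterP1.
by rewrite coefXn (gtn_eqF hb) /= mulr0n mulr0 polyC0 iota0r.
Qed.

Lemma phi_mono_ne A B a : (a < A)%N -> phiAB A B (ioXY 'X^a 'X^B) = 0.
Proof.
move=> ha; rewrite /phiAB iterQP Dif_iter ?size_polyXn // iterP1.
rewrite Dif_iter; last by rewrite size_iter_shift size_polyXn ltnS ltnW.
by rewrite (coef_iter_shX _ (ltnW ha)) (gtn_eqF ha) /= mulr0n mulr0 polyC0 iota0l.
Qed.

Lemma fact_neq0 n : (n`!)%:R != 0 :> C.
Proof.
have h : (n`!)%:R != 0 :> (Rdefinitions.R)[i] by rewrite pnatr_eq0 -lt0n fact_gt0.
exact: h.
Qed.

Lemma phi_mono_eq A B : exists2 k : C, k != 0 &
  phiAB A B (ioXY 'X^A 'X^B) = k%:MP.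
Proof.
rewrite /phiAB iterQP Dif_iter ?size_polyXn // iterP1.
rewrite Dif_iter; last by rewrite size_iter_shift size_polyXn.
rewrite coef_iter_shX // iotaC; eexists; last reflexivity.
rewrite coefXn !eqxx /= !mulr1n !mulr1 subr0 kQP.
rewrite !mulf_neq0 ?fact_neq0 ?expf_neq0 //.
by rewrite oppr_eq0 oner_eq0.
Qed.
End StepB.


Lemma iota_Zr a p q : ioXY p (a *: q) = a *: ioXY p q.
Proof. by have := iota_linr a p q 0; rewrite !addr0 iota0r addr0. Qed.

Lemma mono_comp_lt Kb (m : 'X_{1..2 < Kb}) (i : 'I_2) : (m i < Kb)%N.
Proof.
apply: leq_ltn_trans (bmdeg m); rewrite mdegE (bigD1 i) //=; exact: leq_addr.
Qed.

Lemma stepB w : W w -> w != 0 -> exists2 v, v != 0 & W (t 1 v).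
Proof.
move=> hw hw0.
have [l hl] := tensor_span ht w.
pose Kb := (\sum_(p <- l) msize p.1)%N.
pose u (m : 'X_{1..2 < Kb}) : V := \sum_(p <- l) p.1@_m *: p.2.
have hw' : w = \sum_(m : 'X_{1..2 < Kb}) t 'X_[m] (u m).
  rewrite hl.
  transitivity (\sum_(p <- l) \sum_(m : 'X_{1..2 < Kb}) t 'X_[m] (p.1@_m *: p.2)).
    rewrite big_seq [RHS]big_seq; apply: eq_bigr => p hp.
    rewrite {1}(@mpolywE _ _ Kb p.1); last by rewrite /Kb (big_rem p hp) /= leq_addr.
    rewrite (bil_suml tb); apply: eq_bigr => m _; by rewrite (bilZl tb) (bilZr tb).
  rewrite exchange_big /=; apply: eq_bigr => m _; by rewrite /u (bil_sumr tb).
have [N hN] := killed_fin u.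
case: (pickP (fun m => u m != 0)) => [m0 hm0 | hnone]; last first.
  case/negP: hw0; apply/eqP; rewrite hw'; apply: big1 => m _.
  by move: (hnone m) => /= /negbFE /eqP ->; rewrite (bil0r tb).
pose F (m : 'X_{1..2 < Kb}) := (m ord_max * Kb + m ord0)%N.
case: (@arg_maxnP _ m0 (fun m => u m != 0) F hm0) => ms hms hmax.
have hA := mono_comp_lt ms ord0.
set A := ms ord0 in hA *; set B := ms ord_max.
have key : forall m : 'X_{1..2 < Kb}, u m != 0 -> m != ms ->
    phiAB N A B 'X_[m] = 0.
  move=> m hm hne; have := hmax m hm; rewrite /F => hle.
  have h0 := mono_comp_lt m ord0.
  rewrite mono_iota.
  have : (m ord_max <= B)%N by nia.
  rewrite leq_eqVlt => /orP[/eqP e1|hlt]; last exact: phi_mono_lt.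
  rewrite e1; apply: phi_mono_ne.
  rewrite ltn_neqAle; apply/andP; split; last by nia.
  apply: contra hne => /eqP he0; apply/eqP; apply: val_inj; apply/mnmP => i.
  case: i => [[|[|//]]] hi.
    by have -> : Ordinal hi = ord0 by apply: val_inj.
  by have -> : Ordinal hi = ord_max by apply: val_inj.
have [k hk0 hk] := phi_mono_eq N A B.
have hw2 : W (\sum_(m : 'X_{1..2 < Kb}) t 'X_[m] (u m)) by rewrite -hw'.
have hW' := @good_phi N A B 'X_{1..2 < Kb} (index_enum _) (fun m => 'X_[m]) u hN hw2.
have hsum : \sum_(i <- index_enum 'X_{1..2 < Kb}) t (phiAB N A B 'X_[i]) (u i) =
    t k%:MP (u ms).
  rewrite (bigD1 ms) //= big1 ?addr0.
    by rewrite mono_iota hk.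
  move=> m hne; case: (eqVneq (u m) 0) => [->|hm]; first by rewrite (bil0r tb).
  by rewrite key // (bil0l tb).
exists (k *: u ms).
  by rewrite scaler_eq0 negb_or hk0.
have e1 : t k%:MP (u ms) = t 1 (k *: u ms).
  by rewrite -[k%:MP]mulr1 mul_mpolyC (bilZl tb) (bilZr tb).
by rewrite -e1 -hsum.
Qed.

Lemma stepC v N : killed N v -> W (t 1 v) -> forall f, W (t f v).
Proof.
move=> hk h1.
pose k : int := (N.+1)%:Z.
have hkN : N%:Z < k by rewrite /k ltz_nat.
pose Aset f := W (t f v).
have A_lin a f g : Aset f -> Aset g -> Aset (a *: f + g).
  by move=> hf hg; rewrite /Aset (proj1 tb); apply: Wlin.
have A_Z a f : Aset f -> Aset (a *: f).
  by move=> hf; rewrite /Aset (bilZl tb); by apply: (subZ W0 Wlin a).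
have A_D f g : Aset f -> Aset g -> Aset (f + g).
  by move=> hf hg; rewrite /Aset (bilDl tb); by apply: (subD Wlin).
have A_B f g : Aset f -> Aset g -> Aset (f - g).
  by move=> hf hg; rewrite /Aset (bilBl tb); by apply: (subB Wlin).
have A_good phi : good N phi -> forall f, Aset f -> Aset (phi f).
  move=> hp f hf; have := hp unit [:: tt] (fun _ => f) (fun _ => v) (fun _ => hk).
  by rewrite !big_seq1; apply.
have AH := A_good _ (good_H hkN).
have AL := A_good _ (good_L hkN).
have claim1 : forall p, Aset (evp Xv p).
  elim/poly_ind => [|p c1 hp].
    by rewrite rmorph0 /Aset (bil0l tb).
  rewrite rmorphD rmorphM /= evpX evpC.
  have := AH _ hp; rewrite shift_evp shiftXY_Xv mpolyC0 addr0 => h.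
  rewrite mulrC -[c1%:MP]mulr1 mul_mpolyC; exact: A_D _ _ h (A_Z c1 1 h1).
have claim2 : forall (b : nat) (q p : {poly C}), (size q <= b.+1)%N -> Aset (ioXY p q).
  elim=> [|b IH] q p hq.
    rewrite (size1_polyC hq) -[(q`_0)%:P]mulr1 mul_polyC iota_Zr iota_p1.
    exact: A_Z (claim1 p).
  have hX : forall p0, Aset (ioXY p0 'X^(b.+1)).
    move=> p0.
    pose r : {poly C} := 'X^b \Po ('X + (- k%:~R)%:P).
    have hr : size r = b.+1 by rewrite size_shift size_polyXn.
    have := AL _ (IH 'X^b p0 _); rewrite size_polyXn leqnn => /(_ isT).
    rewrite shift_iota polyC0 addr0 comp_polyXr -/r -addrA.
    have eL : (sg * k%:~R)%:MP * Xv + (k%:~R * eta)%:MP =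
        evp Xv ((sg * k%:~R) *: 'X + (k%:~R * eta)%:P).
      by rewrite rmorphD /= evpZ evpX evpC mul_mpolyC.
    rewrite eL iota_L => h.
    set rL := (_ *: 'X + _%:P) in h.
    have h2 : Aset (ioXY (p0 * rL) r) by apply: IH; rewrite hr.
    have h4 : Aset (ioXY p0 (r * 'X)) by have := A_B _ _ h h2; rewrite addrK.
    have hd : (size (r - 'X^b)%R <= b)%N.
      have := @Dif_size' (- k%:~R) 0 'X^b b; rewrite size_polyXn leqnn => /(_ isT).
      by rewrite /Dif polyC0 addr0 comp_polyXr.
    have h3 : Aset (ioXY p0 ((r - 'X^b) * 'X)).
      apply: IH; apply: leq_trans (size_mul_leq _ _) _.
      by rewrite size_polyX addn2 /= ltnS.
    have ePoly : 'X^(b.+1) = r * 'X - (r - 'X^b) * 'X by rewrite exprSr; ring.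
    by rewrite ePoly iota_subr; exact: A_B _ _ h4 h3.
  have hs : (size (q - q`_b.+1 *: 'X^(b.+1))%R <= b.+1)%N.
    apply/leq_sizeP => j hj; rewrite coefB coefZ coefXn.
    case: (eqVneq j b.+1) => [ej|hne]; first by rewrite ej ?eqxx /= ?mulr1n ?mulr1 subrr.
    rewrite /= mulr0n mulr0 subr0 nth_default //.
    by apply: leq_trans hq _; rewrite ltn_neqAle eq_sym hne hj.
  have eq : q = q`_b.+1 *: 'X^(b.+1) + (q - q`_b.+1 *: 'X^(b.+1)) by rewrite addrC subrK.
  rewrite eq iota_linr; exact: A_lin _ _ _ (hX p) (IH _ p hs).
move=> f; rewrite (mpolyE f) /Aset (bil_suml tb).
apply: (sub_sumT W0 Wlin) => m.
rewrite (bilZl tb); apply: (subZ W0 Wlin); rewrite mono_iota.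
by apply: (claim2 (m ord_max)); rewrite size_polyXn.
Qed.

Lemma W_all w : W w -> w != 0 -> forall z, W z.
Proof.
move=> hw hw0.
have [v hv0 hv] := stepB hw hw0.
have [N hN] := rres v.
have hall := @stepC v N hN hv.
pose Kset (u : V) := forall f, W (t f u).
have hKs : is_submodule rho Kset.
  split; first by move=> f; rewrite (bil0r tb).
  split.
    by move=> a u1 u2 h1 h2 f; rewrite (proj2 tb); apply: Wlin.
  move=> x u hu f.
  have e1 := hta x f u.
  have -> : t f (rho x u) = act x (t f u) - t (omega x f) u by rewrite e1 [t (omega x f) u + _]addrC addrK.
  by apply: (subB Wlin); [apply: Wact | apply: hu].
case: (proj2 rirr Kset hKs) => [h0|hall'].
  by case/negP: hv0; apply/eqP; apply: h0.
move=> z; have [l ->] := tensor_span ht z.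
by apply: (sub_sumT W0 Wlin) => p; apply: hall'.
Qed.

End WithW.

Lemma gen_irreducible : irreducible act.
Proof.
split.
  have [[v0 hv0] _] := rirr; exists (t 1 v0).
  by apply: t_neq0 hv0 _; exists (fun _ => 0); exact: meval1.
move=> W hW.
case: (classic (exists w, W w /\ w != 0)) => [[w [hw hw0]]|hno].
  by right; apply: (W_all hW hw hw0).
left => v hv; case: (eqVneq v 0) => // hv0.
by case: hno; exists v.
Qed.
End Generic.

Definition ptv (a y : C) : 'I_2 -> C := fun i => if i == ord0 then a else y.

Lemma ptv0 a y : ptv a y ord0 = a.
Proof. by rewrite /ptv eqxx. Qed.

Lemma meval_shift a0 b0 f a y :
  (shiftXY a0 b0 f).@[ptv a y] = f.@[ptv (a + a0) (y + b0)].
Proof.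
rewrite /shiftXY comp_mpoly_meval; apply: meval_eq => i.
have : i = ord0 \/ i = ord_max.
  by case: i => [[|[|//]]] hi; [left|right]; apply: val_inj.
case=> ->; rewrite (tnth_nth 0) /= mevalD mevalC.
  by rewrite /Xv mevalXU !ptv0.
by rewrite /Yv mevalXU /ptv /=.
Qed.

Lemma meval_polyX s v : (Defs.polyX s).@[v] = s.[v ord0].
Proof.
rewrite /Defs.polyX raddf_sum /= horner_coef; apply: eq_bigr => i _.
by rewrite mevalM mevalC rmorphXn /= /Xv mevalXU.
Qed.

Lemma gen_onlyif (V : lmodType C) (rho : Gbasis -> V -> V) (T : lmodType C)
  (t : CXY -> V -> T) (act : Gbasis -> T -> T) (omega : Gbasis -> CXY -> CXY)
  (rirr : irreducible rho)
  (ht : is_tensor t) (hact : is_Gmodule act) (hta : tensor_action omega rho t act)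
  (a : C) :
  (forall x f, (forall y, f.@[ptv a y] = 0) -> forall y, (omega x f).@[ptv a y] = 0) ->
  ~ irreducible act.
Proof.
move=> hZ [_ hirr]; have [[v0 hv0] _] := rirr.
have tb : Defs.bilinear t := proj1 ht.
pose Z (f : CXY) := forall y, f.@[ptv a y] = 0.
pose W (z : T) := exists l : seq (CXY * V),
  (forall p, p \in l -> Z p.1) /\ z = \sum_(p <- l) t p.1 p.2.
have W1 f v : Z f -> W (t f v).
  move=> hf; exists [:: (f, v)]; split; last by rewrite big_seq1.
  by move=> p; rewrite inE => /eqP -> /=.
have hW0 : W 0 by exists [::]; split => //; rewrite big_nil.
have hWlin : forall b u1 u2, W u1 -> W u2 -> W (b *: u1 + u2).
  move=> b u1 u2 [l1 [h1 ->]] [l2 [h2 ->]].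
  exists ([seq (b *: p.1, p.2) | p <- l1] ++ l2); split.
    move=> p; rewrite mem_cat => /orP[/mapP[q hq ->]|hp] y /=; last exact: h2.
    by rewrite mevalZ h1 // mulr0.
  rewrite big_cat big_map /= scaler_sumr; congr (_ + _).
  by apply: eq_bigr => p _; rewrite (bilZl tb).
have hWact : forall x z, W z -> W (act x z).
  move=> x z [l [hl ->]]; rewrite (lin_sum (proj1 hact x)).
  apply: (sub_sum hW0 hWlin) => p hp; rewrite hta.
  apply: (subD hWlin); apply: W1; [exact: hZ (hl p hp) | exact: hl p hp].
have hsub : is_submodule act W by split => //; split.
have hnz : W (t (Xv - a%:MP) v0).
  by apply: W1 => y; rewrite mevalB mevalC /Xv mevalXU ptv0 subrr.
case: (hirr W hsub) => [h0|hall].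
  have := h0 _ hnz; apply/eqP; apply: (t_neq0 ht hv0).
  exists (ptv (a + 1) 0); rewrite mevalB mevalC /Xv mevalXU ptv0.
  by rewrite addrAC subrr add0r.
have [l [hl he]] := hall (t 1 v0).
have [g [hg hgt]] := ev_map ht (ptv a 0).
have e2 : g (t 1 v0) = 0.
  rewrite he (lin_sum hg) big_seq big1 // => p hp.
  by rewrite hgt (hl p hp 0) scale0r.
by move: e2; rewrite hgt meval1 scale1r => e3; rewrite e3 eqxx in hv0.
Qed.

Theorem theorem4p1 (lam eta : C) (s : {poly C}) (V : lmodType C)
    (rho : Gbasis -> V -> V) :
  lam != 0 -> s != 0 ->
  is_Gmodule rho -> restricted rho -> irreducible rho ->
  (forall (T : lmodType C) (t : CXY -> V -> T) (act : Gbasis -> T -> T),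
     is_tensor t -> is_Gmodule act -> tensor_action (OmegaI lam eta s) rho t act ->
     (irreducible act <-> nonzero_constant s)) /\
  (forall (T : lmodType C) (t : CXY -> V -> T) (act : Gbasis -> T -> T),
     is_tensor t -> is_Gmodule act -> tensor_action (OmegaJ lam eta s) rho t act ->
     (irreducible act <-> nonzero_constant s)).
Proof.
move=> lam0 s0 hrho rres rirr.
have onlyif : forall omega : Gbasis -> CXY -> CXY,
    (forall a, root s a -> forall x f, (forall y, f.@[ptv a y] = 0) ->
       forall y, (omega x f).@[ptv a y] = 0) ->
    forall (T : lmodType C) (t : CXY -> V -> T) (act : Gbasis -> T -> T),
    is_tensor t -> is_Gmodule act -> tensor_action omega rho t act ->
    irreducible act -> nonzero_constant s.
  move=> omega hZ T t act ht hact hta hirr.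
  apply: NNPP => hnc.
  have hsz : size s != 1%N.
    apply/negP => /eqP h1; apply: hnc.
    have hs1 : (size s <= 1)%N by rewrite h1.
    exists s`_0; split; last exact: size1_polyC hs1.
    by move: s0; rewrite {1}(size1_polyC hs1) polyC_eq0.
  have /closed_rootP [a ha] := hsz.
  exact: (gen_onlyif rirr ht hact hta (hZ a ha)) hirr.
split => T t act ht hact hta; split.
- move=> hirr; apply: (onlyif (OmegaI lam eta s) _ T t act ht hact hta hirr) => a ha x f hf y.
  case: x => [m|m|m|m| | | ] /=; rewrite ?meval0 //.
  + by rewrite mevalZ mevalM meval_shift addr0 hf mul0r mulr0.
  + by rewrite mevalZ mevalM meval_shift addr0 hf mulr0 mulr0.
  + by rewrite mevalZ mevalM meval_polyX ptv0 (rootP ha) mul0r mulr0.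
- move=> [c [c0 hsc]]; subst s.
  apply: (@gen_irreducible _ _ _ _ _ _ rres rirr ht hact hta lam c (-1) (-1) eta
     lam0 c0 _ bI).
  + by rewrite oppr_eq0 oner_eq0.
  + by move=> m /=.
  + by move=> m f /=; rewrite polyX_C.
  + by [].
  + by move=> m f /=; rewrite mulN1r mpolyCN mulNr.
- move=> hirr; apply: (onlyif (OmegaJ lam eta s) _ T t act ht hact hta hirr) => a ha x f hf y.
  case: x => [m|m|m|m| | | ] /=; rewrite ?meval0 //.
  + by rewrite mevalZ mevalM meval_shift addr0 hf mul0r mulr0.
  + by rewrite mevalZ mevalM meval_shift addr0 hf mulr0 mulr0.
  + by rewrite mevalZ mevalM meval_polyX ptv0 (rootP ha) mul0r mulr0.
- move=> [c [c0 hsc]]; subst s.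
  apply: (@gen_irreducible _ _ _ _ _ _ rres rirr ht hact hta lam c 1 1 eta
     lam0 c0 _ bJ).
  + by rewrite oner_eq0.
  + by move=> m /=.
  + by move=> m f /=; rewrite polyX_C.
  + by [].
  + by move=> m f /=; rewrite mul1r.
Qed.
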